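(* Let $n\in\mathbb N$, let $K_1,\dots,K_n$ be singular kernel functions and let $J$ be an arbitrary $n$-field function. Let $\mathbf y\in\overline S$ with $0<y_1\le\dots\le y_n<1$, and let $j\in\{0,\dots,n\}$ satisfy $m_j(\mathbf y)\ne-\infty$. Then $m_j$ is Lipschitz continuous on $\{\mathbf x\in\overline S:\|\mathbf x-\mathbf y\|<\varepsilon\}$ for some $\varepsilon>0$. In particular, the vector function $\mathbf m=(m_0,\dots,m_n)$ is locally Lipschitz continuous on the regularity set $Y$.
   Context: A kernel function is a function $K:(-1,0)\cup(0,1)\to\mathbb R$ that is concave on $(-1,0)$ and concave on $(0,1)$ and satisfies $\lim_{t\downarrow0}K(t)=\lim_{t\uparrow0}K(t)$. It is extended to $[-1,1]$ with values in $[-\infty,\infty)$ by its one-sided limits at $-1,0,1$. A kernel function is singular if $K(0)=-\infty$. An $n$-field function is a function $J:[0,1]\to[-\infty,\infty)$ that is bounded above and whose set of finite values has total weight strictly greater than $n$. Here the points $0$ and $1$ each have weight $1/2$ and every point of $(0,1)$ has weight $1$. $S=\{\mathbf y\in\mathbb R^n:0<y_1<\dots<y_n<1\}$ and $\overline S$ is its closure. $F(\mathbf y,t)=J(t)+\sum_{i=1}^nK_i(t-y_i)$, with the convention $a+(-\infty)=-\infty$. Set $y_0:=0$ and $y_{n+1}:=1$. Let $I_j(\mathbf y)=[y_j,y_{j+1}]$ and $m_j(\mathbf y)=\sup_{t\in I_j(\mathbf y)}F(\mathbf y,t)$. $Y=\{\mathbf y\in S:m_j(\mathbf y)\neq-\infty\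 \forall j\}$. $\|\mathbf v\|=\max_i|v_i|$. *)

(* Defs.v *)
From HB Require Import structures.
From mathcomp Require Import all_boot all_order all_algebra.
From mathcomp Require Import all_classical all_reals all_analysis.
Set Implicit Arguments. Unset Strict Implicit. Unset Printing Implicit Defensive.
Import Order.TTheory GRing.Theory Num.Theory.
Import numFieldNormedType.Exports.
Local Open Scope classical_set_scope.
Local Open Scope ring_scope.

Section Defs.
Variable R : realType.

Definition concave_on (f : R -> R) (a b : R) : Prop :=
  forall x y l : R, a < x < b -> a < y < b -> 0 <= l <= 1 ->
    l * f x + (1 - l) * f y <= f (l * x + (1 - l) * y).

(* A kernel function, already extended to [-1,1] by its one-sided limits.
   Values outside [-1,1] are irrelevant. *)
Definition kernel_function (K : R -> \bar R) : Prop :=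
  [/\ (forall t, (-1 < t < 0) || (0 < t < 1) -> K t \is a fin_num),
      concave_on (fun t => fine (K t)) (-1) 0,
      concave_on (fun t => fine (K t)) 0 1,
      (K x @[x --> 0^'-] --> K 0) /\ (K x @[x --> 0^'+] --> K 0) &
      (K x @[x --> (-1)^'+] --> K (-1)) /\ (K x @[x --> 1^'-] --> K 1)].

Definition singular_kernel (K : R -> \bar R) : Prop :=
  kernel_function K /\ K 0 = -oo%E.

Definition wt (t : R) : R := if (t == 0) || (t == 1) then 2^-1 else 1.

Definition weight (A : set R) : \bar R := \esum_(t in A) (wt t)%:E.

Definition field_function (n : nat) (J : R -> \bar R) : Prop :=
  (exists M : R, forall t, 0 <= t <= 1 -> (J t <= M%:E)%E) /\
  (n%:R%:E < weight [set t | (0 <= t <= 1)%R /\ J t \is a fin_num])%E.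

(* y_0 := 0, y_(k+1) := y k for k < n, y_(n+1) := 1 *)
Definition yext (n : nat) (y : 'I_n -> R) (k : nat) : R :=
  if k is k'.+1 then (if insub k' is Some i then y i else 1) else 0.

Definition inS (n : nat) (y : 'I_n -> R) : Prop :=
  forall k, (k <= n)%N -> yext y k < yext y k.+1.

Definition inSbar (n : nat) (y : 'I_n -> R) : Prop :=
  forall k, (k <= n)%N -> yext y k <= yext y k.+1.

Definition maxnorm (n : nat) (v : 'I_n -> R) : R := \big[Num.max/0]_(i < n) `|v i|.

Definition Fval (n : nat) (J : R -> \bar R) (K : 'I_n -> R -> \bar R)
  (y : 'I_n -> R) (t : R) : \bar R :=
  (J t + \sum_(i < n) K i (t - y i)%R)%E.

Definition mval (n : nat) (J : R -> \bar R) (K : 'I_n -> R -> \bar R)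
  (j : 'I_n.+1) (y : 'I_n -> R) : \bar R :=
  ereal_sup [set Fval J K y t | t in `[yext y j, yext y j.+1]].

Definition inY (n : nat) (J : R -> \bar R) (K : 'I_n -> R -> \bar R)
  (y : 'I_n -> R) : Prop :=
  inS y /\ forall j : 'I_n.+1, mval J K j y != -oo%E.

End Defs.

(* Main.v *)
Require Import Defs.
From HB Require Import structures.
From mathcomp Require Import all_boot all_order all_algebra.
From mathcomp Require Import all_classical all_reals all_analysis.
From mathcomp Require Import ring lra.
Import Order.TTheory GRing.Theory Num.Theory.
Import numFieldNormedType.Exports.
Local Open Scope classical_set_scope.
Local Open Scope ring_scope.
Set Implicit Arguments. Unset Strict Implicit.

Section Helpers.
Variable R : realType.
Implicit Types f : R -> R.
Lemma chord f lo hi p q r : concave_on f lo hi -> lo < p -> p < q -> q < r -> r < hi ->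
  (r - q) * f p + (q - p) * f r <= (r - p) * f q.
Proof.
move=> H lp pq qr rh.
have rp : 0 < r - p by lra.
pose l := (r - q) / (r - p).
have e1 : (r - p) * l = r - q by rewrite /l mulrC -mulrA mulVf ?mulr1 //; lra.
have e2 : (r - p) * (1 - l) = q - p by rewrite mulrBr e1 mulr1; lra.
have l0 : 0 <= l by rewrite /l divr_ge0 //; lra.
have l1 : l <= 1 by rewrite /l ler_pdivrMr // mul1r; lra.
have E : l * p + (1 - l) * r = q.
  by rewrite /l; field; exact: lt0r_neq0.
clearbody l. have := H p r l _ _ _; rewrite E => /(_ _ _ _) H'.
have {}H' : l * f p + (1 - l) * f r <= f q by apply: H'; apply/andP; lra.
have := ler_wpM2l (ltW rp) H'.
by rewrite mulrDr !mulrA e1 e2.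
Qed.

Lemma conc_ub f lo hi a b : concave_on f lo hi -> lo < a -> b < hi ->
  exists C, forall s, a <= s <= b -> f s <= C.
Proof.
move=> H la bh.
pose a' := (lo + a) / 2.
have la' : lo < a' by rewrite /a'; lra.
have a'a : a' < a by rewrite /a'; lra.
exists (`|f a| + (`|b - a'| * (`|f a| + `|f a'|)) / (a - a')) => s /andP[ha sb].
have aa0 : 0 < a - a' by lra.
have fa := ler_norm (f a).
have fa' := ler_norm (f a'); have fa'' := ler_norm (- f a'); rewrite normrN in fa''.
have X : 0 <= (`|b - a'| * (`|f a| + `|f a'|)) / (a - a').
  by apply: divr_ge0; [apply: mulr_ge0 => //; apply: addr_ge0|lra].
case: (ltrP a s) => [hal|]; last first.
  move=> sa; have -> : s = a by lra. lra.
have C := chord H la' a'a hal (le_lt_trans sb bh).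
suff : f s <= (`|b - a'| * (`|f a| + `|f a'|)) / (a - a') by have := normr_ge0 (f a); lra.
rewrite ler_pdivlMr //.
have h1 : (s - a') * f a <= `|b - a'| * `|f a|.
  apply: le_trans (ler_norm _) _; rewrite normrM ler_wpM2r //.
  by rewrite !ger0_norm; lra.
have h2 : - ((s - a) * f a') <= `|b - a'| * `|f a'|.
  apply: le_trans (ler_norm _) _; rewrite normrN normrM ler_wpM2r //.
  by rewrite !ger0_norm; lra.
rewrite mulrDr; lra.
Qed.

Lemma conc_lip f lo hi a b : concave_on f lo hi -> lo < a -> b < hi ->
  exists L, 0 <= L /\ forall s s', a <= s <= b -> a <= s' <= b ->
    `|f s - f s'| <= L * `|s - s'|.
Proof.
move=> H la bh.
have [C HC] := conc_ub H la bh.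
pose a' := (lo + a) / 2.
have la' : lo < a' by rewrite /a'; lra.
have a'a : a' < a by rewrite /a'; lra.
pose b' := (b + hi) / 2.
have bh' : b' < hi by rewrite /b'; lra.
have bb' : b < b' by rewrite /b'; lra.
pose L1 := `|C - f a'| / (a - a').
pose L2 := `|C - f b'| / (b' - b).
have L10 : 0 <= L1 by rewrite divr_ge0 //; lra.
have L20 : 0 <= L2 by rewrite divr_ge0 //; lra.
exists (L1 + L2); split; first lra.
suff W : forall s s', a <= s <= b -> a <= s' <= b -> s < s' ->
    `|f s - f s'| <= (L1 + L2) * `|s - s'|.
  move=> s s' hs hs'; case: (ltgtP s s') => [ss|ss|->]; first exact: W.
    by rewrite distrC (distrC s); exact: W.
  by rewrite !subrr normr0 mulr0.
move=> s s' /andP[ha sb] /andP[ha' sb'] ss.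
have ss0 : 0 <= s' - s by lra.
rewrite (distrC s) (gtr0_norm (_ : 0 < s' - s)); last lra.
have U : f s' - f s <= L1 * (s' - s).
  have C1 := chord H la' (lt_le_trans a'a ha) ss (le_lt_trans sb' bh).
  have hC : f s' - f a' <= `|C - f a'|.
    apply: le_trans (ler_norm _); have := HC s'; rewrite ha' sb' => /(_ isT); lra.
  have P1 : (s' - a') * (f s' - f s) <= (s' - s) * `|C - f a'|.
    have := ler_wpM2l (_ : 0 <= s' - s) hC.
    rewrite mulrBr => /(_ ltac:(lra)) Q. lra.
  case: (lerP (f s' - f s) 0) => D; first by have := mulr_ge0 L10 ss0; lra.
  have P2 : (a - a') * (f s' - f s) <= (s' - a') * (f s' - f s).
    by rewrite ler_wpM2r //; [lra|lra].
  rewrite mulrC /L1 mulrA ler_pdivlMr; last lra.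
  rewrite mulrC. lra.
have V : f s - f s' <= L2 * (s' - s).
  have C2 := chord H (lt_le_trans la ha) ss (le_lt_trans sb' bb') bh'.
  have hC : f s - f b' <= `|C - f b'|.
    apply: le_trans (ler_norm _); have := HC s; rewrite ha sb => /(_ isT); lra.
  have P1 : (b' - s) * (f s - f s') <= (s' - s) * `|C - f b'|.
    have := ler_wpM2l (_ : 0 <= s' - s) hC.
    rewrite mulrBr => /(_ ltac:(lra)) Q. lra.
  case: (lerP (f s - f s') 0) => D; first by have := mulr_ge0 L20 ss0; lra.
  have P2 : (b' - b) * (f s - f s') <= (b' - s) * (f s - f s').
    by rewrite ler_wpM2r //; [lra|lra].
  rewrite mulrC /L2 mulrA ler_pdivlMr; last lra.
  rewrite mulrC. lra.
have := mulr_ge0 L10 ss0; have := mulr_ge0 L20 ss0.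
rewrite ler_norml mulrDl; move=> *; apply/andP; split; lra.
Qed.
Lemma near_right (P : R -> Prop) : (\forall x \near 0^'+, P x) -> exists2 e : R, 0 < e & forall x, 0 < x < e -> P x.
Proof.
move=> /nbhs_ballP[e e0 H]; exists e => // x /andP[x0 xe]; apply: H => //.
  rewrite /ball /= sub0r normrN gtr0_norm //.
Qed.
Lemma near_left (P : R -> Prop) : (\forall x \near 0^'-, P x) -> exists2 e : R, 0 < e & forall x, - e < x < 0 -> P x.
Proof.
move=> /nbhs_ballP[e e0 H]; exists e => // x /andP[x0 xe]; apply: H => //.
  rewrite /ball /= sub0r normrN ltr0_norm //; lra.
Qed.
Lemma yextS n (y : 'I_n -> R) (i : 'I_n) : yext y i.+1 = y i.
Proof. by rewrite /yext valK. Qed.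
Lemma yextN n (y : 'I_n -> R) : yext y n.+1 = 1.
Proof. by rewrite /yext insubF // ltnn. Qed.
Lemma yext_cases n (x y : 'I_n -> R) k : yext x k = yext y k \/ exists i, yext x k = x i /\ yext y k = y i.
Proof.
case: k => [|k]; first by left.
rewrite /yext; case: insubP => [i _ _|_]; [right; exists i|left] => //.
Qed.
Lemma yext_range n (x : 'I_n -> R) k : (forall i, 0 <= x i <= 1) -> 0 <= yext x k <= 1.
Proof.
move=> h; case: k => [|k]; first by rewrite /= lexx ler01.
rewrite /yext; case: insubP => [i _ _|_] //; by rewrite ler01 lexx.
Qed.

Lemma minf n (f : 'I_n -> R) : (forall i, 0 < f i) ->
  exists2 m, 0 < m & forall i, m <= f i.
Proof.
move=> h; exists (\big[Num.min/1]_(i < n) f i).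
  apply: (big_ind (fun m => 0 < m)) => //.
  by move=> a b a0 b0; rewrite lt_min a0 b0.
by move=> i; rewrite (bigD1 i) //= ge_min lexx.
Qed.

Lemma sum_ge n (f : 'I_n -> R) k : (forall i, 0 <= f i) -> f k <= \sum_(i < n) f i.
Proof.
move=> h; rewrite (bigD1 k) //=.
have : 0 <= \sum_(i < n | i != k) f i by apply: sumr_ge0 => i _.
lra.
Qed.

Lemma le_maxnorm n (v : 'I_n -> R) i : `|v i| <= maxnorm v.
Proof. by rewrite /maxnorm (bigD1 i) //= le_max lexx. Qed.

Lemma maxnorm_ge0 n (v : 'I_n -> R) : 0 <= maxnorm v.
Proof.
rewrite /maxnorm; apply: (big_ind (fun m => 0 <= m)) => //.
by move=> a b a0 b0; rewrite le_max a0.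
Qed.

Lemma maxnorm_le n (v : 'I_n -> R) B : 0 <= B -> (forall i, `|v i| <= B) -> maxnorm v <= B.
Proof.
move=> B0 h; rewrite /maxnorm; apply: (big_ind (fun m => m <= B)) => //.
by move=> a b a0 b0; rewrite ge_max a0.
Qed.

Lemma maxnorm_sym n (x y : 'I_n -> R) :
  maxnorm (fun i => x i - y i) = maxnorm (fun i => y i - x i).
Proof. by rewrite /maxnorm; apply: eq_bigr => i _; rewrite distrC. Qed.

Section Kernel.
Variable K : R -> \bar R.
Hypothesis hK : singular_kernel K.

Lemma ker_fin s : (-1 < s < 0) || (0 < s < 1) -> K s \is a fin_num.
Proof. by case: hK => [[hf _ _ _ _] _]; exact: hf. Qed.

Lemma ker_near0 B : exists r, 0 < r /\ forall s, `|s| < r -> (K s <= B%:E)%E.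
Proof.
case: hK => [[_ _ _ [l0 r0] _] K0]; rewrite K0 in l0 r0.
have [e1 e10 H1] := near_right (cvgeNy_le r0 B).
have [e2 e20 H2] := near_left (cvgeNy_le l0 B).
exists (Num.min e1 e2); split; first by rewrite lt_min e10 e20.
move=> s; rewrite lt_min => /andP[s1 s2].
rewrite ltr_norml in s1; rewrite ltr_norml in s2.
have [sn|sp|s0] := ltgtP s 0.
- by apply: H2; apply/andP; split; lra.
- by apply: H1; apply/andP; split; lra.
- by rewrite s0 K0 leNye.
Qed.

Lemma ker_ub d : d < 1 -> exists C, 0 <= C /\ forall s, `|s| <= d -> (K s <= C%:E)%E.
Proof.
move=> d1.
have [r [r0 Hr]] := ker_near0 0.
case: hK => [[hf c1 c2 _ _] K0].
have [C1 H1] := conc_ub c2 r0 d1.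
have e1 : -1 < -d by lra.
have e2 : -r < 0 by lra.
have [C2 H2] := conc_ub c1 e1 e2.
exists (`|C1| + `|C2|); split; first by rewrite addr_ge0.
have n1 := ler_norm C1; have n2 := ler_norm C2.
have n1' := normr_ge0 C1; have n2' := normr_ge0 C2.
move=> s sd; case: (ltrP `|s| r) => sr.
  by apply: le_trans (Hr s sr) _; rewrite lee_fin addr_ge0.
rewrite ler_norml in sd.
case: (lerP 0 s) => s0.
  rewrite ger0_norm // in sr.
  have f : K s \is a fin_num by apply: hf; apply/orP; right; apply/andP; split; lra.
  rewrite -(fineK f) lee_fin.
  have := H1 s; rewrite sr /= => /(_ ltac:(lra)); lra.
rewrite ltr0_norm // in sr.
have f : K s \is a fin_num by apply: hf; apply/orP; left; apply/andP; split; lra.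
rewrite -(fineK f) lee_fin.
have := H2 s => /(_ ltac:(apply/andP; split; lra)); lra.
Qed.

Lemma ker_lip a d : 0 < a -> d < 1 -> exists L, 0 <= L /\ forall s s',
  ((a <= s <= d) && (a <= s' <= d)) || ((-d <= s <= -a) && (-d <= s' <= -a)) ->
  (K s <= K s' + (L * `|s - s'|)%:E)%E.
Proof.
move=> a0 d1.
case: hK => [[hf c1 c2 _ _] K0].
have [L1 [L10 H1]] := conc_lip c2 a0 d1.
have e1 : -1 < -d by lra.
have e2 : -a < 0 by lra.
have [L2 [L20 H2]] := conc_lip c1 e1 e2.
exists (L1 + L2); split; first by rewrite addr_ge0.
move=> s s' /orP[/andP[/andP[h1 h2] /andP[h3 h4]]|/andP[/andP[h1 h2] /andP[h3 h4]]].
  have f : K s \is a fin_num by apply: hf; apply/orP; right; apply/andP; split; lra.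
  have f' : K s' \is a fin_num by apply: hf; apply/orP; right; apply/andP; split; lra.
  rewrite -(fineK f) -(fineK f') -EFinD lee_fin.
  have := H1 s s'; rewrite h1 h2 h3 h4 => /(_ isT isT).
  have := mulr_ge0 L20 (normr_ge0 (s - s')).
  rewrite mulrDl ler_norml; move=> ? /andP[? ?]; lra.
have f : K s \is a fin_num by apply: hf; apply/orP; left; apply/andP; split; lra.
have f' : K s' \is a fin_num by apply: hf; apply/orP; left; apply/andP; split; lra.
rewrite -(fineK f) -(fineK f') -EFinD lee_fin.
have := H2 s s'; rewrite h1 h2 h3 h4 => /(_ isT isT).
have := mulr_ge0 L10 (normr_ge0 (s - s')).
rewrite mulrDl ler_norml; move=> ? /andP[? ?]; lra.
Qed.
End Kernel.
End Helpers.

Section Main.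
Variables (R : realType) (n : nat) (K : 'I_n -> R -> \bar R) (J : R -> \bar R).
Hypothesis hK : forall i, singular_kernel (K i).
Hypothesis hJ : field_function n J.

Local Notation F := (Fval J K).

Lemma maxnorm_lt (v : 'I_n -> R) B : 0 < B -> (forall i, `|v i| < B) -> maxnorm v < B.
Proof.
move=> B0 h; rewrite /maxnorm; apply: (big_ind (fun m => m < B)) => //.
by move=> a b a0 b0; rewrite gt_max a0.
Qed.

Lemma in_cc (a b t : R) : `[a, b]%classic t -> a <= t <= b.
Proof. by rewrite /= in_itv /=. Qed.
Lemma in_cc' (a b t : R) : a <= t <= b -> `[a, b]%classic t.
Proof. by rewrite /= in_itv /=. Qed.

Lemma F_ub C M x t : (forall t, 0 <= t <= 1 -> (J t <= M%:E)%E) -> 0 <= t <= 1 ->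
  (forall i, (K i (t - x i) <= C%:E)%E) -> (F x t <= (M + \sum_(i < n) C)%:E)%E.
Proof.
move=> hM ht hC; rewrite /Fval EFinD; apply: leeD; first exact: hM.
rewrite -sumEFin; apply: lee_sum => i _; exact: hC.
Qed.

Lemma F_le C M x t k B : (forall t, 0 <= t <= 1 -> (J t <= M%:E)%E) -> 0 <= t <= 1 ->
  0 <= C -> (forall i, (K i (t - x i) <= C%:E)%E) -> (K k (t - x k) <= B%:E)%E ->
  (F x t <= (M + \sum_(i < n) C + B)%:E)%E.
Proof.
move=> hM ht C0 hC hk; rewrite /Fval -addrA EFinD; apply: leeD; first exact: hM.
rewrite (bigD1 k) //= addrC EFinD; apply: leeD => //.
apply: (@le_trans _ _ ((\sum_(i < n | i != k) C)%:E)).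
  rewrite -sumEFin; apply: lee_sum => i _; exact: hC.
rewrite lee_fin [X in _ <= X](bigD1 k) //=; lra.
Qed.

Lemma part1 (y : 'I_n -> R) (j : 'I_n.+1) :
      (forall i, 0 < y i < 1) -> mval J K j y != -oo%E ->
      exists eps : R, 0 < eps /\ exists L : R,
        forall x x' : 'I_n -> R,
          maxnorm (fun i => x i - y i) < eps ->
          maxnorm (fun i => x' i - y i) < eps ->
          mval J K j x \is a fin_num /\
          `|fine (mval J K j x) - fine (mval J K j x')|
            <= L * maxnorm (fun i => x i - x' i).
Proof.
move=> hy01 hm.
have [M hM] := hJ.1.
have [c c0 hc] : exists2 c, 0 < c & forall i, c <= Num.min (y i) (1 - y i).
  apply: minf => i; rewrite lt_min; case/andP: (hy01 i) => ? ?; apply/andP; split; lra.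
have cy i : c <= y i /\ y i <= 1 - c.
  by have := hc i; rewrite le_min => /andP[? ?]; split; lra.
pose d := 1 - c / 2.
have d1 : d < 1 by rewrite /d; lra.
have [Cf hCf] := choice (fun i => ker_ub (hK i) d1).
pose C := \sum_(i < n) Cf i.
have C0 : 0 <= C by apply: sumr_ge0 => i _; case: (hCf i).
have hC i s : `|s| <= d -> (K i s <= C%:E)%E.
  move=> hs; apply: le_trans ((hCf i).2 s hs) _; rewrite lee_fin.
  by apply: sum_ge => i'; case: (hCf i').
pose UB := M + \sum_(i < n) C.
have [t0 [ht0 Ft0]] : exists t0, `[yext y j, yext y j.+1]%classic t0 /\ F y t0 != -oo%E.
  apply: contrapT => hno; move/negP: hm; apply.
  rewrite /mval -leeNy_eq; apply/ereal_supP => z [t ht <-].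
  rewrite leeNy_eq; apply/negPn/negP => hz; apply: hno; by exists t.
have y01 i : 0 <= y i <= 1 by case/andP: (hy01 i) => ? ?; apply/andP; split; lra.
have t01 : 0 <= t0 <= 1.
  move: ht0 => /in_cc /andP[h1 h2].
  have := yext_range j y01; have := yext_range j.+1 y01.
  move=> /andP[? ?] /andP[? ?]; apply/andP; split; lra.
have argd (x : 'I_n -> R) t i : 0 <= t <= 1 -> (forall i, `|x i - y i| < c / 2) ->
    `|t - x i| <= d.
  move=> /andP[? ?] hx; have := hx i; have := cy i; rewrite ltr_norml ler_norml /d.
  by move=> [? ?] /andP[? ?]; apply/andP; split; lra.
have Fub x t : 0 <= t <= 1 -> (forall i, `|x i - y i| < c / 2) -> (F x t <= UB%:E)%E.
  by move=> ht hx; apply: F_ub => // i; apply: hC; exact: argd.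
have yc : forall i, `|y i - y i| < c / 2 by move=> i; rewrite subrr normr0; lra.
have Fy0fin : F y t0 \is a fin_num.
  apply: fin_real; apply/andP; split; first by rewrite ltNye.
  exact: le_lt_trans (Fub _ _ t01 yc) (ltry _).
pose V := fine (F y t0).
have FV : F y t0 = V%:E by rewrite fineK.
have t0y i : 0 < `|t0 - y i|.
  rewrite normr_gt0 subr_eq0; apply/eqP => e.
  have hk : (K i (t0 - y i) <= (V - UB - 1)%:E)%E by rewrite e subrr (hK i).2 leNye.
  have := @F_le C M y t0 i (V - UB - 1) hM t01 C0
    (fun i' => hC i' _ (argd y t0 i' t01 yc)) hk.
  by rewrite FV lee_fin /UB; lra.
have [d0 d00 hd0] := minf t0y.
pose A := V - 1.
pose Bk := A - UB - 1.
have [rf hrf] := choice (fun i => ker_near0 (hK i) Bk).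
have [r r0 hr] := minf (fun i => (hrf i).1).
pose del := Num.min d0 (r / 2).
have del0 : 0 < del by rewrite lt_min d00 /=; lra.
have deld0 : del <= d0 by rewrite ge_min lexx.
have delr : del <= r / 2 by rewrite ge_min lexx orbT.
have del20 : 0 < del / 2 by lra.
have [Lf hLf] := choice (fun i => ker_lip (hK i) del20 d1).
pose Lt := \sum_(i < n) Lf i.
have Lt0 : 0 <= Lt by apply: sumr_ge0 => i _; case: (hLf i).
pose eps := Num.min (Num.min (del / 2) (c / 2)) (1 / (Lt + 1)).
have eps0 : 0 < eps.
  rewrite !lt_min del20 /=; apply/andP; split; first lra.
  by rewrite divr_gt0 //; lra.
have epsd : eps <= del / 2 by rewrite /eps !ge_min lexx.
have epsc : eps <= c / 2 by rewrite /eps !ge_min lexx orbT.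
have epsL : eps * Lt < 1.
  have : eps <= 1 / (Lt + 1) by rewrite /eps ge_min lexx orbT.
  rewrite ler_pdivlMr; last lra.
  rewrite mulrDr mulr1; lra.
exists eps; split => //; exists Lt.
pose T0 t := yext y j <= t <= yext y j.+1 /\ forall i, del <= `|t - y i|.
pose ball x := forall i, `|x i - y i| < eps.
have ballc x : ball x -> forall i, `|x i - y i| < c / 2.
  by move=> bx i; apply: lt_le_trans (bx i) epsc.
have ballr x : ball x -> forall i, 0 <= x i <= 1.
  move=> bx i; have := ballc x bx i; have := cy i; rewrite ltr_norml.
  by move=> [? ?] /andP[? ?]; apply/andP; split; lra.
have T0x x t : ball x -> T0 t -> yext x j <= t <= yext x j.+1.
  move=> bx [/andP[h1 h2] hd]; apply/andP; split.
    case: (yext_cases x y j) => [->|[i [-> e]]] //.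
    rewrite e in h1; have := hd i; rewrite ger0_norm; last lra.
    have := bx i; rewrite ltr_norml => /andP[? ?] ?; lra.
  case: (yext_cases x y j.+1) => [->|[i [-> e]]] //.
  rewrite e in h2; have := hd i; rewrite ler0_norm; last lra.
  have := bx i; rewrite ltr_norml => /andP[? ?] ?; lra.
have notT0 x t : ball x -> yext x j <= t <= yext x j.+1 -> ~ T0 t ->
    exists i, `|t - y i| < del.
  move=> bx /andP[h1 h2] hn; apply: contrapT => hall; apply: hn; split; last first.
    move=> i; rewrite leNgt; apply/negP => hi; apply: hall; by exists i.
  apply/andP; split.
    rewrite leNgt; apply/negP => hlt.
    case: (yext_cases x y j) => [e|[i [e1 e2]]]; first by rewrite e in h1; lra.
    apply: hall; exists i; rewrite e1 in h1; rewrite e2 in hlt.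
    have := bx i; rewrite !ltr_norml => /andP[? ?]; apply/andP; split; lra.
  rewrite leNgt; apply/negP => hlt.
  case: (yext_cases x y j.+1) => [e|[i [e1 e2]]]; first by rewrite e in h2; lra.
  apply: hall; exists i; rewrite e1 in h2; rewrite e2 in hlt.
  have := bx i; rewrite !ltr_norml => /andP[? ?]; apply/andP; split; lra.
have Fsmall x t : ball x -> 0 <= t <= 1 -> (exists i, `|t - y i| < del) ->
    (F x t <= A%:E)%E.
  move=> bx ht [i hi].
  have bxc := ballc x bx.
  have := @F_le C M x t i Bk hM ht C0 (fun i' => hC i' _ (argd x t i' ht bxc)).
  have hk : (K i (t - x i) <= Bk%:E)%E.
    apply: (hrf i).2; apply: lt_le_trans (hr i).
    have := bx i; move: hi; rewrite !ltr_norml => /andP[? ?] /andP[? ?].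
    apply/andP; split; lra.
  move=> /(_ hk) h; apply: le_trans h _; rewrite lee_fin /Bk /UB; lra.
have FLip x x' t : ball x -> ball x' -> T0 t ->
    (F x t <= F x' t + (Lt * maxnorm (fun i => x i - x' i))%:E)%E.
  move=> bx bx' [ht hd].
  have t1 : 0 <= t <= 1.
    have := T0x x t bx (conj ht hd); have := yext_range j (ballr x bx).
    have := yext_range j.+1 (ballr x bx).
    move=> /andP[? ?] /andP[? ?] /andP[? ?]; apply/andP; split; lra.
  rewrite /Fval -addeA; apply: leeD2l.
  apply: (@le_trans _ _ (\sum_(i < n) (K i (t - x' i) + (Lf i * `|x i - x' i|)%:E))%E).
    apply: lee_sum => i _.
    have := (hLf i).2 (t - x i) (t - x' i).
    have -> : t - x i - (t - x' i) = - (x i - x' i) by ring.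
    rewrite normrN; apply.
    have := argd x t i t1 (ballc x bx); have := argd x' t i t1 (ballc x' bx').
    have := bx i; have := bx' i; have := hd i.
    rewrite !ltr_norml !ler_norml ler_normr.
    move=> /orP[] ? /andP[? ?] /andP[? ?] /andP[? ?] /andP[? ?].
      apply/orP; left; apply/andP; split; apply/andP; split; lra.
    apply/orP; right; apply/andP; split; apply/andP; split; lra.
  rewrite big_split /= sumEFin leeD2l // lee_fin /Lt mulr_suml.
  apply: ler_sum => i _; apply: ler_wpM2l; first by case: (hLf i).
  exact: le_maxnorm.
have bally : ball y by move=> i; rewrite subrr normr0.
have T0t0 : T0 t0.
  move: ht0 => /in_cc h; split => // i.
  exact: le_trans deld0 (hd0 i).
have Fx0 x : ball x -> (A%:E < F x t0)%E.
  move=> bx; have := FLip y x t0 bally bx T0t0; rewrite FV.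
  have mn : maxnorm (fun i => y i - x i) < eps.
    by apply: maxnorm_lt eps0 _ => i; rewrite distrC; exact: bx i.
  have := ler_wpM2l Lt0 (ltW mn).
  case: (F x t0) => [z| |] //=.
    rewrite -EFinD lee_fin lte_fin /A => ? ?; lra.
  by move=> _ _; exact: ltry.
have mge x t' : yext x j <= t' <= yext x j.+1 -> (F x t' <= mval J K j x)%E.
  move=> ht'; apply: le_ereal_sup_tmp; exists (F x t') => //.
  by exists t' => //; exact: in_cc'.
have key x x' : ball x -> ball x' -> mval J K j x \is a fin_num /\
    (mval J K j x <= mval J K j x' + (Lt * maxnorm (fun i => x i - x' i))%:E)%E.
  move=> bx bx'; split.
    apply: fin_real; apply/andP; split.
      apply: lt_le_trans (ltNyr A) _; apply: le_trans (ltW (Fx0 x bx)) _.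
      exact: mge (T0x x t0 bx T0t0).
    apply: le_lt_trans (ltry UB); apply/ereal_supP => z [t ht <-].
    apply: Fub; last exact: ballc.
    have := in_cc ht; have := yext_range j (ballr x bx).
    have := yext_range j.+1 (ballr x bx).
    move=> /andP[? ?] /andP[? ?] /andP[? ?]; apply/andP; split; lra.
  apply/ereal_supP => z [t /in_cc ht <-].
  case: (pselect (T0 t)) => hT.
    apply: le_trans (FLip x x' t bx bx' hT) _; apply: leeD2r.
    exact: mge (T0x x' t bx' hT).
  have t1 : 0 <= t <= 1.
    have := yext_range j (ballr x bx); have := yext_range j.+1 (ballr x bx).
    move: ht => /andP[? ?] /andP[? ?] /andP[? ?]; apply/andP; split; lra.
  apply: le_trans (Fsmall x t bx t1 (notT0 x t bx ht hT)) _.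
  apply: le_trans (ltW (Fx0 x' bx')) _.
  apply: le_trans (mge x' t0 (T0x x' t0 bx' T0t0)) _.
  apply: leeDl; rewrite lee_fin; apply: mulr_ge0 => //; exact: maxnorm_ge0.
move=> x x' hx hx'.
have bx : ball x by move=> i; apply: le_lt_trans (le_maxnorm _ i) hx.
have bx' : ball x' by move=> i; apply: le_lt_trans (le_maxnorm _ i) hx'.
have [f1 k1] := key x x' bx bx'; have [f2 k2] := key x' x bx' bx.
split => //; rewrite maxnorm_sym in k2.
move: k1 k2; rewrite -(fineK f1) -(fineK f2) -!EFinD !lee_fin => k1 k2.
by rewrite ler_norml; apply/andP; split; lra.
Qed.

Lemma inS01 (y : 'I_n -> R) : inS y -> forall i, 0 < y i < 1.
Proof.
move=> hy.
have pos : forall k, (k <= n)%N -> 0 < yext y k.+1.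
  elim=> [|k IH] hk.
    have e : yext y 0 = 0 by [].
    by have := hy 0%N (leq0n n); rewrite e.
  have := hy k.+1 hk; have := IH (ltnW hk); lra.
have lt1 : forall m k, (k + m = n)%N -> yext y k < 1.
  elim=> [|m IH] k hkm.
    rewrite addn0 in hkm; subst k.
    by have := hy n (leqnn n); rewrite yextN.
  have hk : (k <= n)%N by rewrite -hkm leq_addr.
  have := hy k hk; have := IH k.+1 (etrans (addSnnS k m) hkm); lra.
move=> i.
have := lt1 (n - i.+1)%N i.+1 (subnKC (ltn_ord i)).
have := pos i (ltnW (ltn_ord i)).
by rewrite !yextS => -> ->.
Qed.

Lemma part2 : forall y : 'I_n -> R, inY J K y ->
      exists eps : R, 0 < eps /\ exists L : R,
        forall x x' : 'I_n -> R,
          inY J K x -> maxnorm (fun i => x i - y i) < eps ->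
          inY J K x' -> maxnorm (fun i => x' i - y i) < eps ->
          maxnorm (fun j : 'I_n.+1 => fine (mval J K j x) - fine (mval J K j x'))
            <= L * maxnorm (fun i => x i - x' i).
Proof.
move=> y [hS hm].
have y01 := inS01 hS.
have [f hf] := choice (fun j => part1 y01 (hm j)).
have [g hg] := choice (fun j => (hf j).2).
have [eps e0 he] := minf (fun j => (hf j).1).
exists eps; split => //; exists (\sum_(j < n.+1) `|g j|).
move=> x x' _ hx _ hx'.
apply: maxnorm_le.
  apply: mulr_ge0; [apply: sumr_ge0 => *; exact: normr_ge0 | exact: maxnorm_ge0].
move=> j; have [_ h] := hg j x x' (lt_le_trans hx (he j)) (lt_le_trans hx' (he j)).
apply: le_trans h _; apply: ler_wpM2r; first exact: maxnorm_ge0.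
apply: le_trans (ler_norm _) _; apply: sum_ge => *; exact: normr_ge0.
Qed.
End Main.

Theorem proposition5p1 (R : realType) (n : nat) (K : 'I_n -> R -> \bar R)
    (J : R -> \bar R) :
  (forall i, singular_kernel (K i)) -> field_function n J ->
  (forall (y : 'I_n -> R) (j : 'I_n.+1),
      inSbar y -> (forall i, 0 < y i < 1) -> mval J K j y != -oo%E ->
      exists eps : R, 0 < eps /\ exists L : R,
        forall x x' : 'I_n -> R,
          inSbar x -> maxnorm (fun i => x i - y i) < eps ->
          inSbar x' -> maxnorm (fun i => x' i - y i) < eps ->
          mval J K j x \is a fin_num /\
          `|fine (mval J K j x) - fine (mval J K j x')|
            <= L * maxnorm (fun i => x i - x' i)) /\
  (forall y : 'I_n -> R, inY J K y ->
      exists eps : R, 0 < eps /\ exists L : R,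
        forall x x' : 'I_n -> R,
          inY J K x -> maxnorm (fun i => x i - y i) < eps ->
          inY J K x' -> maxnorm (fun i => x' i - y i) < eps ->
          maxnorm (fun j : 'I_n.+1 => fine (mval J K j x) - fine (mval J K j x'))
            <= L * maxnorm (fun i => x i - x' i)).
Proof.
move=> hK hJ; split; last exact: part2.
move=> y j _ hy hm; have [eps [e0 [L HL]]] := part1 hK hJ hy hm.
exists eps; split => //; exists L => x x' _ hx _ hx'; exact: HL.
Qed.
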